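(* Let $\mathcal X$ be a separable Hilbert space, $a:\mathcal X\times\mathcal X\to\mathbb R$ a bounded bilinear form with $\inf_{x\neq0}a(x,x)/\|x\|_{\mathcal X}^2=c_0>0$, $f\in\mathcal X^*$, and let $u\in\mathcal X$ solve $a(u,v)=f(v)$ for all $v\in\mathcal X$. Let $(w_n)_{n\in\mathbb N}$ be a Riesz basis of $\mathcal X$ with a constant $C>0$ such that every $x=\sum_n\lambda_nw_n\in\mathcal X$ satisfies $C^{-1}\|x\|_{\mathcal X}^2\le\sum_n\lambda_n^2\le C\|x\|_{\mathcal X}^2$, and let $\mathcal X_\ell={\rm span}\{w_1,\dots,w_{N_\ell}\}$ for integers $N_\ell<N_{\ell+1}$; let $u_\ell\in\mathcal X_\ell$ solve $a(u_\ell,v)=f(v)$ for all $v\in\mathcal X_\ell$. If the matrix $M_{ij}:=a(w_j,w_i)$ belongs to the Jaffard class $\mathcal J$, then there exists $C_{\rm qo}>0$ with \[ C_{\rm qo}^{-1}\|u-u_\ell\|_{\mathcal X}^2\le\sum_{k=\ell}^\infty\|u_{k+1}-u_k\|_{\mathcal X}^2\le C_{\rm qo}\|u-u_\ell\|_{\mathcal X}^2\quad\text{for all }\ell\in\mathbb N. \] The constant $C_{\rm qo}$ depends only on $(w_n)$, $a$, $C$, $c_0$, the Jaffard class and $\mathcal X$.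
   Context: $M\in\mathcal J$ means there exist a metric $d$ on $\mathbb N$ with $\sup_i\sum_j\exp(-\varepsilon d(i,j))<\infty$ for all $\varepsilon>0$, and $\gamma>0$, such that for every $0<\gamma'<\gamma$ there is $C(\gamma')$ with $|M_{ij}|\le C(\gamma')\exp(-\gamma'd(i,j))$ for all $i,j$. *)

(* Defs.v *)
From HB Require Import structures.
From mathcomp Require Import all_boot all_order all_algebra.
From mathcomp Require Import all_classical all_reals all_analysis.
Set Implicit Arguments. Unset Strict Implicit. Unset Printing Implicit Defensive.
Import Order.TTheory GRing.Theory Num.Theory.
Import numFieldNormedType.Exports.
Local Open Scope classical_set_scope.
Local Open Scope ring_scope.

(* [ip] is an inner product on V inducing the norm of V (so V, being complete,
   is a real Hilbert space). *)
Definition hilbert_inner (R : realType) (V : normedModType R) (ip : V -> V -> R) :=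
  [/\ forall r x y z, ip (r *: x + y) z = r * ip x z + ip y z,
      forall x y, ip x y = ip y x,
      forall x, 0 <= ip x x &
      forall x, `|x| ^+ 2 = ip x x].

Definition separable_space (R : realType) (V : normedModType R) :=
  exists D : set V, countable D /\ dense D.

Definition bounded_bilinear (R : realType) (V : normedModType R) (a : V -> V -> R) :=
  [/\ forall r x y z, a (r *: x + y) z = r * a x z + a y z,
      forall r x y z, a z (r *: x + y) = r * a z x + a z y &
      exists K : R, forall x y, `|a x y| <= K * `|x| * `|y| ].

Definition coercivity_constant (R : realType) (V : normedModType R)
    (a : V -> V -> R) (c0 : R) :=
  (forall x : V, x != 0 -> c0 <= a x x / `|x| ^+ 2) /\
  (forall c : R, (forall x : V, x != 0 -> c <= a x x / `|x| ^+ 2) -> c <= c0).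

Definition dual_elt (R : realType) (V : normedModType R) (f : V -> R) :=
  (forall r x y, f (r *: x + y) = r * f x + f y) /\
  exists K : R, forall x, `|f x| <= K * `|x|.

Definition series_to (R : realType) (V : normedModType R)
    (w : nat -> V) (lam : nat -> R) (x : V) :=
  (fun n => \sum_(i < n) lam i *: w i) @ \oo --> x.

(* Riesz basis with constant C (indexed from 0) *)
Definition riesz_basis (R : realType) (V : normedModType R) (w : nat -> V) (C : R) :=
  (forall x : V, exists lam : nat -> R, series_to w lam x) /\
  (forall (x : V) (lam : nat -> R), series_to w lam x ->
     ((C^-1 * `|x| ^+ 2)%:E <= \sum_(0 <= n <oo) ((lam n) ^+ 2)%:E)%E /\
     (\sum_(0 <= n <oo) ((lam n) ^+ 2)%:E <= (C * `|x| ^+ 2)%:E)%E).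

Definition span_first (R : realType) (V : normedModType R) (w : nat -> V) (N : nat) : set V :=
  [set x | exists c : nat -> R, x = \sum_(i < N) c i *: w i].

Definition nat_metric (R : realType) (d : nat -> nat -> R) :=
  [/\ forall i j, 0 <= d i j,
      forall i j, d i j = 0 <-> i = j,
      forall i j, d i j = d j i &
      forall i j k, d i k <= d i j + d j k].

Definition jaffard (R : realType) (M : nat -> nat -> R) :=
  exists d : nat -> nat -> R,
    nat_metric d /\
    (forall eps : R, 0 < eps -> exists B : R, forall i : nat,
        (\sum_(0 <= j <oo) (expR (- (eps * d i j)))%:E <= B%:E)%E) /\
    exists gamma : R, 0 < gamma /\
      forall gamma' : R, 0 < gamma' -> gamma' < gamma ->
        exists Cg : R, forall i j, `|M i j| <= Cg * expR (- (gamma' * d i j)).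

(* Main.v *)
Require Import Defs.
From HB Require Import structures.
From mathcomp Require Import all_boot all_order all_algebra.
From mathcomp Require Import all_classical all_reals all_analysis.
From mathcomp Require Import ring lra.
Import Order.TTheory GRing.Theory Num.Theory.
Import numFieldNormedType.Exports.
Local Open Scope classical_set_scope.
Local Open Scope ring_scope.
Set Implicit Arguments. Unset Strict Implicit. Unset Printing Implicit Defensive.
Definition bil (R : realType) (V : normedModType R) (b : V -> V -> R) :=
  (forall r x y z, b (r *: x + y) z = r * b x z + b y z) /\
  (forall r x y z, b z (r *: x + y) = r * b z x + b z y).

Definition flipb (R : realType) (V : normedModType R) (b : V -> V -> R) :=
  fun x y => b y x.

Lemma bil_flip (R : realType) (V : normedModType R) (b : V -> V -> R) :
  bil b -> bil (flipb b).
Proof. by case=> h1 h2; split=> r x y z; rewrite /flipb ?h1 ?h2. Qed.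

Lemma bil_l0 (R : realType) (V : normedModType R) (b : V -> V -> R) z :
  bil b -> b 0 z = 0.
Proof. case=> h1 _; have := h1 1 0 0 z; rewrite scaler0 addr0 mul1r; lra. Qed.

Lemma bil_lD (R : realType) (V : normedModType R) (b : V -> V -> R) x y z :
  bil b -> b (x + y) z = b x z + b y z.
Proof. by case=> h1 _; have := h1 1 x y z; rewrite scale1r mul1r. Qed.

Lemma bil_lZ (R : realType) (V : normedModType R) (b : V -> V -> R) r x z :
  bil b -> b (r *: x) z = r * b x z.
Proof. move=> hb; have := hb.1 r x 0 z; rewrite addr0 bil_l0 // addr0. by []. Qed.

Lemma bil_lN (R : realType) (V : normedModType R) (b : V -> V -> R) x z :
  bil b -> b (- x) z = - b x z.
Proof. by move=> hb; rewrite -scaleN1r bil_lZ // mulN1r. Qed.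

Lemma bil_lB (R : realType) (V : normedModType R) (b : V -> V -> R) x y z :
  bil b -> b (x - y) z = b x z - b y z.
Proof. by move=> hb; rewrite bil_lD // bil_lN. Qed.

Lemma bil_lsum (R : realType) (V : normedModType R) (b : V -> V -> R) n (F : nat -> V) z :
  bil b -> b (\sum_(i < n) F i) z = \sum_(i < n) b (F i) z.
Proof.
move=> hb; elim: n => [|n IH]; first by rewrite !big_ord0 bil_l0.
by rewrite !big_ord_recr /= bil_lD // IH.
Qed.

Lemma bil_lsumZ (R : realType) (V : normedModType R) (b : V -> V -> R) n (c : nat -> R) (F : nat -> V) z :
  bil b -> b (\sum_(i < n) c i *: F i) z = \sum_(i < n) c i * b (F i) z.
Proof. by move=> hb; rewrite (@bil_lsum _ _ b n (fun i => c i *: F i) z hb); apply: eq_bigr => i _; rewrite bil_lZ. Qed.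

Lemma bil_r0 (R : realType) (V : normedModType R) (b : V -> V -> R) z :
  bil b -> b z 0 = 0.
Proof. by move=> /bil_flip/bil_l0; apply. Qed.
Lemma bil_rD (R : realType) (V : normedModType R) (b : V -> V -> R) x y z :
  bil b -> b z (x + y) = b z x + b z y.
Proof. by move=> /bil_flip/bil_lD; apply. Qed.
Lemma bil_rZ (R : realType) (V : normedModType R) (b : V -> V -> R) r x z :
  bil b -> b z (r *: x) = r * b z x.
Proof. by move=> /bil_flip/bil_lZ; apply. Qed.
Lemma bil_rB (R : realType) (V : normedModType R) (b : V -> V -> R) x y z :
  bil b -> b z (x - y) = b z x - b z y.
Proof. by move=> /bil_flip/bil_lB; apply. Qed.
Lemma bil_rsumZ (R : realType) (V : normedModType R) (b : V -> V -> R) n (c : nat -> R) (F : nat -> V) z :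
  bil b -> b z (\sum_(i < n) c i *: F i) = \sum_(i < n) c i * b z (F i).
Proof. by move=> /bil_flip/bil_lsumZ; apply. Qed.

Lemma span_sum (R : realType) (V : normedModType R) (w : nat -> V) N (c : nat -> R) :
  span_first w N (\sum_(i < N) c i *: w i).
Proof. by exists c. Qed.

Lemma span0 (R : realType) (V : normedModType R) (w : nat -> V) N :
  span_first w N 0.
Proof. exists (fun _ => 0); by rewrite big1 // => i _; rewrite scale0r. Qed.

Lemma spanZD (R : realType) (V : normedModType R) (w : nat -> V) N r x y :
  span_first w N x -> span_first w N y -> span_first w N (r *: x + y).
Proof.
move=> [c ->] [e ->]; exists (fun i => r * c i + e i).
rewrite scaler_sumr -big_split /=; apply: eq_bigr => i _.
by rewrite scalerDl scalerA.
Qed.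

Lemma spanD (R : realType) (V : normedModType R) (w : nat -> V) N x y :
  span_first w N x -> span_first w N y -> span_first w N (x + y).
Proof. by move=> hx hy; have := spanZD 1 hx hy; rewrite scale1r. Qed.

Lemma spanZ (R : realType) (V : normedModType R) (w : nat -> V) N r x :
  span_first w N x -> span_first w N (r *: x).
Proof. by move=> hx; have := spanZD r hx (span0 w N); rewrite addr0. Qed.

Lemma spanB (R : realType) (V : normedModType R) (w : nat -> V) N x y :
  span_first w N x -> span_first w N y -> span_first w N (x - y).
Proof. by move=> hx hy; apply: spanD => //; rewrite -scaleN1r; apply: spanZ. Qed.

Lemma sum_widen (V : zmodType) N M (F : nat -> V) :
  (N <= M)%N -> (forall k, (N <= k)%N -> F k = 0) ->
  \sum_(i < N) F i = \sum_(i < M) F i.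
Proof.
move=> hNM hF; rewrite (big_ord_widen M F hNM) big_mkcond /=.
apply: eq_bigr => i _; case: ifP => // /negbT; rewrite -leqNgt => h.
by rewrite hF.
Qed.

Lemma span_mono (R : realType) (V : normedModType R) (w : nat -> V) N M x :
  (N <= M)%N -> span_first w N x -> span_first w M x.
Proof.
move=> hNM [c ->]; exists (fun i => if (i < N)%N then c i else 0).
rewrite (big_ord_widen M (fun i => c i *: w i) hNM) big_mkcond /=.
by apply: eq_bigr => i _; case: ifP => _ //; rewrite scale0r.
Qed.

Lemma span_w (R : realType) (V : normedModType R) (w : nat -> V) N k :
  (k < N)%N -> span_first w N (w k).
Proof.
move=> hk; apply: (span_mono hk); exists (fun i => if i == k then 1 else 0).
rewrite big_ord_recr /= eqxx scale1r big1 ?add0r // => i _.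
by rewrite (ltn_eqF (ltn_ord i)) scale0r.
Qed.

Lemma span_sumZ (R : realType) (V : normedModType R) (w : nat -> V) N M
    (y : nat -> R) (F : nat -> V) :
  (forall i, (i < M)%N -> span_first w N (F i)) ->
  span_first w N (\sum_(i < M) y i *: F i).
Proof.
elim: M => [|M IH] h; first by rewrite big_ord0; apply: span0.
rewrite big_ord_recr /= addrC; apply: spanZD; first by apply: h.
by apply: IH => i hi; apply: h; apply: ltnW.
Qed.

Lemma riesz_fin (R : realType) (V : normedModType R) (w : nat -> V) (C : R) :
  riesz_basis w C -> forall N (c : nat -> R),
  C^-1 * `|\sum_(i < N) c i *: w i| ^+ 2 <= \sum_(i < N) c i ^+ 2 /\
  \sum_(i < N) c i ^+ 2 <= C * `|\sum_(i < N) c i *: w i| ^+ 2.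
Proof.
case=> _ hR N c.
set c' := fun n => if (n < N)%N then c n else 0.
have E1 : forall n, (N <= n)%N -> \sum_(i < n) c' i *: w i = \sum_(i < N) c i *: w i.
  move=> n hn; rewrite -(sum_widen (F := fun i => c' i *: w i) hn); last first.
    by move=> k hk; rewrite /c' ltnNge hk scale0r.
  by apply: eq_bigr => i _; rewrite /c' ltn_ord.
have hs : series_to w c' (\sum_(i < N) c i *: w i).
  by rewrite /series_to; apply: cvg_near_cst; exists N => // n /= hn; apply: E1.
have [h1 h2] := hR _ _ hs.
have E : (\sum_(0 <= n <oo) ((c' n) ^+ 2)%:E)%E = (\sum_(i < N) c i ^+ 2)%:E.
  apply: lim_near_cst => //; exists N => // n /= hn.
  rewrite sumEFin big_mkord; congr EFin.
  rewrite -(sum_widen (F := fun i => c' i ^+ 2) hn); last first.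
    by move=> k hk; rewrite /c' ltnNge hk expr0n.
  by apply: eq_bigr => i _; rewrite /c' ltn_ord.
by rewrite E !lee_fin in h1 h2.
Qed.

Lemma sqrn (R : realType) (x : R) : `|x| ^+ 2 = x ^+ 2.
Proof. exact: real_normK (num_real x). Qed.

Lemma sum2_half (R : realType) N M (F : nat -> nat -> R) :
  \sum_(k < N) \sum_(l < M) (F k l / 2) = (\sum_(k < N) \sum_(l < M) F k l) / 2.
Proof. by rewrite mulr_suml; apply: eq_bigr => k _; rewrite mulr_suml. Qed.

Lemma amgm_E (R : realType) (a b E : R) : 0 <= E ->
  `|a| * `|b| * E <= a ^+ 2 * E / 2 + b ^+ 2 * E / 2.
Proof.
move=> hE; rewrite -(sqrn a) -(sqrn b).
have := mulr_ge0 (sqr_ge0 (`|a| - `|b|)) hE; nra.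
Qed.

Lemma schur1 (R : realType) N (x : nat -> R) (E : nat -> nat -> R) S :
  (forall j k, 0 <= E j k) -> (forall j, \sum_(k < N) E j k <= S) ->
  (forall k, \sum_(j < N) E j k <= S) ->
  \sum_(j < N) \sum_(k < N) `|x j| * `|x k| * E j k <= S * \sum_(j < N) x j ^+ 2.
Proof.
move=> hE hr hc.
apply: (@le_trans _ _ (\sum_(j < N) \sum_(k < N)
   (x j ^+ 2 * E j k / 2 + x k ^+ 2 * E j k / 2))).
  by apply: ler_sum => j _; apply: ler_sum => k _; apply: amgm_E.
under eq_bigr do rewrite big_split /=.
rewrite big_split /= [X in _ + X <= _]exchange_big /=.
have H1 : forall (F : nat -> nat -> R), (forall j, \sum_(k < N) F j k <= S) ->
   \sum_(j < N) \sum_(k < N) (x j ^+ 2 * F j k / 2) <= S / 2 * \sum_(j < N) x j ^+ 2.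
  move=> F hF; rewrite mulr_sumr; apply: ler_sum => j _.
  under eq_bigr do rewrite mulrAC.
  rewrite -mulr_sumr; have := hF j; have := sqr_ge0 (x j); nra.
have := H1 _ hr; have := H1 (fun j k => E k j) hc; lra.
Qed.

Lemma cs_weighted (R : realType) N (p a : nat -> R) :
  (forall k, 0 <= p k) ->
  (\sum_(k < N) p k * a k) ^+ 2 <= (\sum_(k < N) p k) * \sum_(k < N) p k * a k ^+ 2.
Proof.
move=> hp.
have E1 : (\sum_(k < N) p k * a k) ^+ 2 =
   \sum_(k < N) \sum_(l < N) (p k * a k) * (p l * a l).
  by rewrite expr2 mulr_suml; apply: eq_bigr => k _; rewrite mulr_sumr.
have E2 : (\sum_(k < N) p k) * \sum_(k < N) p k * a k ^+ 2 =
   \sum_(k < N) \sum_(l < N) p k * (p l * a l ^+ 2).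
  by rewrite mulr_suml; apply: eq_bigr => k _; rewrite mulr_sumr.
have E3 : (\sum_(k < N) p k) * \sum_(k < N) p k * a k ^+ 2 =
   \sum_(k < N) \sum_(l < N) p l * (p k * a k ^+ 2).
  by rewrite E2 exchange_big.
rewrite E1.
apply: (@le_trans _ _ (\sum_(k < N) \sum_(l < N)
   (p k * (p l * a l ^+ 2) / 2 + p l * (p k * a k ^+ 2) / 2))).
  apply: ler_sum => k _; apply: ler_sum => l _.
  have := mulr_ge0 (mulr_ge0 (hp k) (hp l)) (sqr_ge0 (a k - a l)); nra.
under eq_bigr do rewrite big_split /=.
have h1 := sum2_half N N (fun k l => p k * (p l * a l ^+ 2)).
have h2 := sum2_half N N (fun k l => p l * (p k * a k ^+ 2)).
simpl in h1, h2.
rewrite big_split /= h1 h2 -E2 -E3; lra.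
Qed.

Lemma schur2 (R : realType) N (P p : nat -> nat -> R) (g : nat -> R) S :
  (forall m k, `|P m k| <= p m k) -> (forall m, \sum_(k < N) p m k <= S) ->
  (forall k, \sum_(m < N) p m k <= S) -> 0 <= S ->
  \sum_(m < N) (\sum_(k < N) P m k * g k) ^+ 2 <= S ^+ 2 * \sum_(k < N) g k ^+ 2.
Proof.
move=> hP hr hc hS.
have hp : forall m k, 0 <= p m k by move=> m k; exact: le_trans (normr_ge0 _) (hP m k).
have step : forall m, (\sum_(k < N) P m k * g k) ^+ 2 <= S * \sum_(k < N) p m k * g k ^+ 2.
  move=> m.
  have h1 : `|\sum_(k < N) P m k * g k| <= \sum_(k < N) p m k * `|g k|.
    apply: le_trans (ler_norm_sum _ _ _) _; apply: ler_sum => k _.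
    by rewrite normrM; apply: ler_wpM2r => //.
  have h2 := @cs_weighted R N (p m) (fun k : nat => (`|g k| : R)) (hp m); simpl in h2.
  have E : \sum_(k < N) p m k * `|g k| ^+ 2 = \sum_(k < N) p m k * g k ^+ 2.
    by apply: eq_bigr => k _; rewrite sqrn.
  rewrite E in h2.
  have h3 : 0 <= \sum_(k < N) p m k * g k ^+ 2.
    by apply: sumr_ge0 => k _; apply: mulr_ge0 => //; apply: sqr_ge0.
  have h4 := hr m.
  have hA := normr_ge0 (\sum_(k < N) P m k * g k).
  rewrite -sqrn; nra.
apply: (@le_trans _ _ (\sum_(m < N) S * \sum_(k < N) p m k * g k ^+ 2)); first by apply: ler_sum => m _; apply: step.
rewrite -mulr_sumr exchange_big /=.
have E : \sum_(k < N) \sum_(m < N) p m k * g k ^+ 2 = \sum_(k < N) (\sum_(m < N) p m k) * g k ^+ 2.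
  by apply: eq_bigr => k _; rewrite mulr_suml.
rewrite E expr2 -mulrA; apply: ler_wpM2l => //.
rewrite mulr_sumr; apply: ler_sum => k _; apply: ler_wpM2r; [exact: sqr_ge0 | exact: hc].
Qed.

Lemma exp_abs1 (R : realType) (x : R) : `|expR x - 1| <= expR `|x| - 1.
Proof.
case: (lerP 0 x) => hx.
  rewrite (ger0_norm hx) ger0_norm // subr_ge0 -expR0 ler_expR //.
rewrite (ltr0_norm hx) ler0_norm; last by rewrite subr_le0 expR_le1 ltW.
rewrite expRN; have hy := expR_gt0 x; set y := expR x in hy *.
have hy0 : y != 0 by rewrite gt_eqF.
have e : (y - 1) ^+ 2 * y^-1 = y - 2 + y^-1 by field.
have hi : 0 <= y^-1 by rewrite invr_ge0 ltW.
have := mulr_ge0 (sqr_ge0 (y - 1)) hi; rewrite e; lra.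
Qed.

Lemma exp_decay (R : realType) (g e d : R) : 0 < g -> 0 < e -> e <= g / 4 -> 0 <= d ->
  expR (- (g * d)) * (expR (e * d) - 1) <= e * (2 / g) * expR (- (g / 4 * d)).
Proof.
move=> hg he heg hd.
set A := expR (g / 4 * d).
have hA : 0 < A by apply: expR_gt0.
have hA0 : A != 0 by rewrite gt_eqF.
have E4 : expR (- (g * d)) = (A ^+ 4)^-1.
  by rewrite expRN /A -expRM_natl; congr (expR _)^-1; rewrite mulrA; congr (_ * d); field.
have E2 : expR (g / 2 * d) = A ^+ 2.
  by rewrite /A -expRM_natl; congr expR; rewrite mulrA; congr (_ * d); field.
set u := expR (e * d).
have hu : 0 < u by apply: expR_gt0.
have h1 : u - 1 <= e * d * u.
  have := expR_ge1Dx (- (e * d)); rewrite expRN -/u => h.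
  have : (1 - e * d) * u <= u^-1 * u by apply: ler_wpM2r; [exact: ltW | lra].
  rewrite mulVf ?gt_eqF //; lra.
have h2 : u <= A by rewrite /u /A ler_expR; apply: ler_wpM2r.
have h3 : d <= 2 / g * A ^+ 2.
  have hx := expR_ge1Dx (g / 2 * d); rewrite E2 in hx.
  have -> : d = 2 / g * (g / 2 * d) by field; rewrite gt_eqF.
  apply: ler_wpM2l; first by apply: divr_ge0 => //; apply: ltW.
  lra.
have key : u - 1 <= e * (2 / g) * A ^+ 3.
  apply: (le_trans h1).
  apply: (@le_trans _ _ (e * d * A)); first by apply: ler_wpM2l => //; apply: mulr_ge0 => //; apply: ltW.
  have -> : e * (2 / g) * A ^+ 3 = e * ((2 / g * A ^+ 2) * A) by ring.
  rewrite -mulrA; apply: ler_wpM2l; first exact: ltW.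
  by apply: ler_wpM2r => //; apply: ltW.
rewrite E4 expRN -/A mulrC.
have -> : A^-1 = A ^+ 3 * (A ^+ 4)^-1 by field.
rewrite mulrA; apply: ler_wpM2r => //.
by rewrite invr_ge0 exprn_ge0 // ltW.
Qed.

Definition goodf (R : realType) (V : normedModType R) (w : nat -> V) (c0 K : R)
    (b : V -> V -> R) (d : nat -> nat -> R) (Cg g : R) :=
  [/\ bil b, forall x y, `|b x y| <= K * `|x| * `|y|,
      forall x, c0 * `|x| ^+ 2 <= b x x &
      forall i j, `|b (w j) (w i)| <= Cg * expR (- (g * d i j))].

Lemma goodf_flip (R : realType) (V : normedModType R) (w : nat -> V) (c0 K : R)
    (b : V -> V -> R) (d : nat -> nat -> R) (Cg g : R) :
  nat_metric d -> goodf w c0 K b d Cg g -> goodf w c0 K (flipb b) d Cg g.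
Proof.
case=> _ _ dsym _ [hb hK hc hM]; split.
- exact: bil_flip.
- move=> x y; rewrite /flipb.
  have -> : K * `|x| * `|y| = K * `|y| * `|x| by ring.
  exact: hK.
- by move=> x; apply: hc.
- by move=> i j; rewrite /flipb dsym; apply: hM.
Qed.

Definition summ (R : realType) (d : nat -> nat -> R) (Bf : R -> R) :=
  forall eps, 0 < eps -> 0 < Bf eps /\
    forall i N, \sum_(j < N) expR (- (eps * d i j)) <= Bf eps.

Definition gphi (R : realType) (V : normedModType R) (w : nat -> V)
    (b : V -> V -> R) n (phi : V) :=
  span_first w n (phi - w n) /\ forall v, span_first w n v -> b phi v = 0.

Lemma gphi_coef (R : realType) (V : normedModType R) (w : nat -> V)
    (b : V -> V -> R) n phi :
  gphi w b n phi -> exists c : nat -> R,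
    [/\ phi = \sum_(k < n.+1) c k *: w k, c n = 1 & forall k, (n < k)%N -> c k = 0].
Proof.
case=> [[c hc] _].
exists (fun k => if (k < n)%N then c k else if k == n then 1 else 0); split.
- rewrite big_ord_recr /= ltnn eqxx scale1r.
  have -> : \sum_(i < n) (if (i < n)%N then c i else if (i : nat) == n then 1 else 0) *: w i
     = \sum_(i < n) c i *: w i by apply: eq_bigr => i _; rewrite ltn_ord.
  by rewrite -hc subrK.
- by rewrite ltnn eqxx.
- by move=> k hk; rewrite ltnNge (ltnW hk) /= gtn_eqF.
Qed.

Lemma gphi_in (R : realType) (V : normedModType R) (w : nat -> V)
    (b : V -> V -> R) n phi :
  gphi w b n phi -> span_first w n.+1 phi.
Proof.
move=> h; have -> : phi = (phi - w n) + w n by rewrite subrK.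
apply: spanD; first exact: (span_mono (leqnSn n) h.1).
exact: span_w.
Qed.

Lemma gphi_w (R : realType) (V : normedModType R) (w : nat -> V)
    (b : V -> V -> R) n phi :
  gphi w b n phi -> forall j, (j < n)%N -> b phi (w j) = 0.
Proof. by move=> h j hj; apply: h.2; apply: span_w. Qed.

Lemma biorth (R : realType) (V : normedModType R) (w : nat -> V)
    (b : V -> V -> R) m j phi psi :
  gphi w b m phi -> gphi w (flipb b) j psi -> m <> j -> b phi psi = 0.
Proof.
move=> hphi hpsi; case: (ltngtP m j) => // hmj _.
- by have := hpsi.2 phi (span_mono hmj (gphi_in hphi)).
- by apply: hphi.2; apply: (span_mono hmj (gphi_in hpsi)).
Qed.

Lemma gdiag (R : realType) (V : normedModType R) (w : nat -> V)
    (b : V -> V -> R) m phi psi :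
  bil b -> gphi w b m phi -> gphi w (flipb b) m psi -> b phi psi = b phi phi.
Proof.
move=> hb hphi hpsi.
have h : span_first w m (psi - phi).
  have -> : psi - phi = (psi - w m) - (phi - w m) by rewrite opprB addrA subrK.
  exact: spanB hpsi.1 hphi.1.
have := hphi.2 _ h; rewrite bil_rB //; lra.
Qed.

Lemma gwdiag (R : realType) (V : normedModType R) (w : nat -> V)
    (b : V -> V -> R) m phi :
  bil b -> gphi w b m phi -> b phi phi = b phi (w m).
Proof. move=> hb hphi; have := hphi.2 _ hphi.1; rewrite bil_rB //; lra. Qed.

Lemma norm_w (R : realType) (V : normedModType R) (w : nat -> V) (C : R) n :
  riesz_basis w C -> 0 < C -> `|w n| ^+ 2 <= C.
Proof.
move=> hR hC.
have [h1 _] := riesz_fin hR n.+1 (fun i => if i == n then 1 else 0).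
have e1 : \sum_(i < n.+1) (if (i : nat) == n then 1 else 0) *: w i = w n.
  rewrite big_ord_recr /= eqxx scale1r big1 ?add0r // => i _.
  by rewrite (ltn_eqF (ltn_ord i)) scale0r.
have e2 : \sum_(i < n.+1) (if (i : nat) == n then 1 else 0) ^+ 2 = 1 :> R.
  rewrite big_ord_recr /= eqxx expr1n big1 ?add0r // => i _.
  by rewrite (ltn_eqF (ltn_ord i)) expr0n.
rewrite e1 e2 in h1.
by rewrite ler_pdivrMl // mulr1 in h1.
Qed.

Lemma gphi_lb (R : realType) (V : normedModType R) (w : nat -> V) (C c0 K : R)
    (b : V -> V -> R) d Cg g n phi :
  riesz_basis w C -> 0 < C -> 0 < c0 -> goodf w c0 K b d Cg g ->
  gphi w b n phi -> c0 / C <= b phi phi.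
Proof.
move=> hR hC hc0 [hb hK hc hM] hphi.
have [c [ephi cn _]] := gphi_coef hphi.
have [_ h2] := riesz_fin hR n.+1 c; rewrite -ephi in h2.
have h3 : 1 <= \sum_(k < n.+1) c k ^+ 2.
  rewrite big_ord_recr /= cn expr1n lerDr; apply: sumr_ge0 => i _; exact: sqr_ge0.
have h4 : C^-1 <= `|phi| ^+ 2.
  by rewrite -[C^-1]mulr1 ler_pdivrMl //; apply: le_trans h3 h2.
apply: le_trans (hc phi); apply: ler_wpM2l => //; exact: ltW.
Qed.

Lemma gphi_ub (R : realType) (V : normedModType R) (w : nat -> V) (C c0 K : R)
    (b : V -> V -> R) d Cg g n phi :
  riesz_basis w C -> 0 < C -> 0 < c0 -> 0 <= K -> goodf w c0 K b d Cg g ->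
  gphi w b n phi -> b phi phi <= K ^+ 2 * C / c0.
Proof.
move=> hR hC hc0 hK0 [hb hK hc hM] hphi.
have e := gwdiag hb hphi.
set t := b phi phi in e *.
have h1 : c0 * `|phi| ^+ 2 <= t := hc phi.
have ht0 : 0 <= t by apply: le_trans h1; apply: mulr_ge0; [exact: ltW | exact: sqr_ge0].
have h2 : t <= K * `|phi| * `|w n| by rewrite e; apply: le_trans (ler_norm _) (hK _ _).
have h3 := norm_w n hR hC.
have hp := normr_ge0 phi; have hw := normr_ge0 (w n).
have h4 : t ^+ 2 <= K ^+ 2 * `|phi| ^+ 2 * C.
  apply: (@le_trans _ _ ((K * `|phi| * `|w n|) ^+ 2)).
    by rewrite ler_sqr ?nnegrE //; apply: mulr_ge0 => //; apply: mulr_ge0.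
  rewrite !exprMn; apply: (ler_wpM2l _ h3); rewrite -exprMn; exact: sqr_ge0.
rewrite ler_pdivlMr //.
have hK2 : 0 <= K ^+ 2 * C by apply: mulr_ge0; [apply: sqr_ge0 | exact: ltW].
have h5 : c0 * t ^+ 2 <= K ^+ 2 * C * t.
  apply: (@le_trans _ _ (K ^+ 2 * C * (c0 * `|phi| ^+ 2))); last first.
    by apply: (ler_wpM2l hK2); exact: h1.
  have -> : K ^+ 2 * C * (c0 * `|phi| ^+ 2) = c0 * (K ^+ 2 * `|phi| ^+ 2 * C) by ring.
  by apply: ler_wpM2l => //; exact: ltW.
case: (ltrP 0 t) => htp; last first.
  have -> : t = 0 by apply: le_anti; rewrite htp ht0.
  by rewrite mul0r.
rewrite -(ler_pM2r htp).
by have -> : t * c0 * t = c0 * t ^+ 2 by ring.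
Qed.

Lemma Mr_bound (R : realType) (V : normedModType R) (w : nat -> V) (c0 K : R)
    (b : V -> V -> R) d Cg g (e : R) n j k :
  nat_metric d -> goodf w c0 K b d Cg g -> 0 < g -> 0 <= Cg -> 0 < e -> e <= g / 4 ->
  `|b (w k) (w j)| * `|expR (e * d j n) / expR (e * d k n) - 1|
    <= e * (Cg * (2 / g)) * expR (- (g / 4 * d j k)).
Proof.
move=> [d0 dz dsym dtri] [hb hK hc hM] hg hCg he heg.
rewrite -expRB.
have h1 : `|e * d j n - e * d k n| <= e * d j k.
  rewrite -mulrBr normrM (gtr0_norm he); apply: ler_wpM2l; first exact: ltW.
  have := dtri j k n; have := dtri k j n; rewrite (dsym k j).
  rewrite ler_norml => ha hb'; apply/andP; split; lra.
have h2 : `|expR (e * d j n - e * d k n) - 1| <= expR (e * d j k) - 1.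
  apply: le_trans (exp_abs1 _) _; rewrite lerD2r ler_expR //.
have h3 := exp_decay hg he heg (d0 j k).
have h4 := hM j k.
have hr0 := normr_ge0 (expR (e * d j n - e * d k n) - 1).
apply: (@le_trans _ _ (Cg * expR (- (g * d j k)) * (expR (e * d j k) - 1))).
  apply: (@le_trans _ _ (`|b (w k) (w j)| * (expR (e * d j k) - 1))).
    by apply: ler_wpM2l => //.
  apply: ler_wpM2r h4; exact: le_trans hr0 h2.
have -> : e * (Cg * (2 / g)) * expR (- (g / 4 * d j k)) =
          Cg * (e * (2 / g) * expR (- (g / 4 * d j k))) by ring.
have -> : Cg * expR (- (g * d j k)) * (expR (e * d j k) - 1) =
  Cg * (expR (- (g * d j k)) * (expR (e * d j k) - 1)) by ring.
by apply: ler_wpM2l.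
Qed.

Lemma decay (R : realType) (V : normedModType R) (w : nat -> V) (C c0 K : R)
    (b : V -> V -> R) d Cg g (Bf : R -> R) (e : R) n phi :
  riesz_basis w C -> 0 < C -> 0 < c0 -> 0 <= K -> nat_metric d -> summ d Bf ->
  goodf w c0 K b d Cg g -> 0 < g -> 0 <= Cg ->
  0 < e -> e <= g / 4 -> e * (Cg * (2 / g)) * Bf (g / 4) <= c0 / C / 2 ->
  gphi w b n phi ->
  exists c : nat -> R, [/\ phi = \sum_(k < n.+1) c k *: w k,
     forall k, (n < k)%N -> c k = 0 &
     forall k, `|c k| <= (1 + 2 * (K ^+ 2 * C / c0) / (c0 / C)) * expR (- (e * d k n))].
Proof.
move=> hR hC hc0 hK0 hd hBf hgood hg hCg he heg heB hphi.
have [hb hK hc hM] := hgood.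
have [d0 dz dsym dtri] := hd.
have [c [ephi cn cz]] := gphi_coef hphi.
exists c; split => // k.
set T := K ^+ 2 * C / c0.
set al := c0 / C.
have hal : 0 < al by apply: divr_gt0.
have hT : 0 <= T by apply: divr_ge0; [apply: mulr_ge0; [apply: sqr_ge0 | exact: ltW] | exact: ltW].
set D := 1 + 2 * T / al.
have hD : 1 <= D by rewrite lerDl; apply: divr_ge0; [apply: mulr_ge0 => // | exact: ltW].
case: (ltnP n k) => hk.
  by rewrite cz // normr0; apply: mulr_ge0; [lra | exact: ltW (expR_gt0 _)].
set om := fun k => expR (e * d k n).
set ct := fun k => om k * c k.
have hom : forall k, 0 < om k by move=> k'; apply: expR_gt0.
set N := n.+1.
set phit := \sum_(k < N) ct k *: w k.
set v := \sum_(j < N) (om j * ct j) *: w j.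
have Ei : b phi v = b phi (w n).
  rewrite /v (bil_rsumZ N (fun j => om j * ct j) w phi hb) big_ord_recr /= big1 ?add0r; last first.
    by move=> j _; rewrite (gphi_w hphi (ltn_ord j)) mulr0.
  have hdn : d n n = 0 by apply/(dz n n).2.
  by rewrite /ct /om hdn mulr0 expR0 cn !mul1r.
have Eii : b phi v = \sum_(j < N) \sum_(k < N) ct j * ct k * b (w k) (w j) * (om j / om k).
  rewrite /v (bil_rsumZ N (fun j => om j * ct j) w phi hb); apply: eq_bigr => j _.
  rewrite {1}ephi (bil_lsumZ N c w (w j) hb) mulr_sumr; apply: eq_bigr => k' _.
  rewrite /ct; field; exact: lt0r_neq0 (hom k').
have Eiii : b phit phit = \sum_(j < N) \sum_(k < N) ct j * ct k * b (w k) (w j).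
  rewrite {2}/phit (bil_rsumZ N ct w phit hb); apply: eq_bigr => j _.
  rewrite /phit (bil_lsumZ N ct w (w j) hb) mulr_sumr; apply: eq_bigr => k' _; ring.
have ctE : forall k, ct k = om k * c k by [].
clearbody ct.
set Q := \sum_(k < N) ct k ^+ 2.
have hQ : 0 <= Q by apply: sumr_ge0 => i _; apply: sqr_ge0.
have hdiff : `|b phi v - b phit phit| <= al * Q / 2.
  rewrite Eii Eiii -sumrB.
  rewrite (eq_bigr (fun j : 'I_N => \sum_(k < N) ct j * ct k * b (w k) (w j) * (om j / om k - 1))); last first.
    by move=> j _; rewrite -sumrB; apply: eq_bigr => k' _; ring.
  apply: le_trans (ler_norm_sum _ _ _) _.
  apply: (@le_trans _ _ (\sum_(j < N) \sum_(k < N) `|ct j| * `|ct k| *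
                 (e * (Cg * (2 / g)) * expR (- (g / 4 * d j k))))).
    apply: ler_sum => j _; apply: le_trans (ler_norm_sum _ _ _) _; apply: ler_sum => k' _.
    rewrite !normrM -mulrA; apply: ler_wpM2l; first by apply: mulr_ge0.
    exact: (Mr_bound n j k' hd hgood hg hCg he heg).
  apply: (@le_trans _ _ (e * (Cg * (2 / g)) * Bf (g / 4) * Q)).
  apply: (@schur1 R N ct (fun j k => e * (Cg * (2 / g)) * expR (- (g / 4 * d j k)))).
  - move=> j k'; apply: mulr_ge0; last exact: ltW (expR_gt0 _).
    apply: mulr_ge0; first exact: ltW.
    by apply: mulr_ge0 => //; apply: divr_ge0 => //; apply: ltW.
  - move=> j; rewrite -mulr_sumr; apply: ler_wpM2l.
      apply: mulr_ge0; first exact: ltW.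
      by apply: mulr_ge0 => //; apply: divr_ge0 => //; apply: ltW.
    have hg4 : 0 < g / 4 by apply: divr_gt0.
    exact: (hBf _ hg4).2.
  - move=> k'; rewrite -mulr_sumr; apply: ler_wpM2l.
      apply: mulr_ge0; first exact: ltW.
      by apply: mulr_ge0 => //; apply: divr_ge0 => //; apply: ltW.
    have hg4 : 0 < g / 4 by apply: divr_gt0.
    under eq_bigr do rewrite dsym.
    exact: (hBf _ hg4).2.
  have -> : al * Q / 2 = al / 2 * Q by ring.
  by apply: ler_wpM2r.
have hpp : al * Q <= c0 * `|phit| ^+ 2.
  have [_ h2] := riesz_fin hR N ct; rewrite -/phit -/Q in h2.
  apply: (@le_trans _ _ (al * (C * `|phit| ^+ 2))); first by apply: ler_wpM2l => //; exact: ltW.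
  rewrite mulrA /al divfK //; exact: lt0r_neq0.
have hpp2 := hc phit.
have ht : b phi (w n) <= T.
  by rewrite -(gwdiag hb hphi); apply: (gphi_ub hR hC hc0 hK0 hgood hphi).
have hnn := ler_norm (b phit phit - b phi v).
rewrite distrC in hdiff.
have hQb : al * Q <= 2 * T by lra.
have hQ2 : Q <= 2 * T / al by rewrite ler_pdivlMr // mulrC.
have hk' : (k < N)%N by [].
have hct : ct k ^+ 2 <= Q.
  rewrite /Q (bigD1 (Ordinal hk')) //= lerDl; apply: sumr_ge0 => i _; apply: sqr_ge0.
have hctD : `|ct k| <= D.
  have h0 := normr_ge0 (ct k); rewrite -sqrn in hct.
  rewrite /D; nra.
have -> : c k = ct k * expR (- (e * d k n)).
  rewrite ctE /om expRN; field; exact: lt0r_neq0 (expR_gt0 _).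
rewrite normrM (gtr0_norm (expR_gt0 _)); apply: ler_wpM2r => //; exact: ltW (expR_gt0 _).
Qed.

Lemma span_by (R : realType) (V : normedModType R) (w : nat -> V) (psi : nat -> V) N :
  (forall m, (m < N)%N -> span_first w m (psi m - w m)) ->
  forall v, span_first w N v -> exists beta : nat -> R, v = \sum_(m < N) beta m *: psi m.
Proof.
elim: N => [|N IH] hpsi v [c ->].
  by exists (fun _ => 0); rewrite !big_ord0.
have hX : span_first w N (\sum_(k < N) c k *: w k + c N *: (w N - psi N)).
  apply: spanD; first exact: span_sum.
  apply: spanZ; rewrite -opprB -scaleN1r; apply: spanZ; exact: hpsi.
have [beta' hb'] := IH (fun m hm => hpsi m (ltnW hm)) _ hX.
exists (fun m => if m == N then c N else beta' m).
rewrite [RHS]big_ord_recr /= eqxx.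
have -> : \sum_(i < N) (if (i : nat) == N then c N else beta' i) *: psi i =
          \sum_(i < N) beta' i *: psi i.
  by apply: eq_bigr => i _; rewrite (ltn_eqF (ltn_ord i)).
rewrite -hb' big_ord_recr /= scalerBr -addrA; congr (_ + _).
by rewrite subrK.
Qed.

Lemma gphi_inN (R : realType) (V : normedModType R) (w : nat -> V) (b : V -> V -> R) m N x :
  gphi w b m x -> (m < N)%N -> span_first w N x.
Proof. by move=> h hm; apply: (span_mono hm); apply: gphi_in h. Qed.

Lemma tpos (R : realType) (V : normedModType R) (w : nat -> V) (C c0 K : R)
    (b : V -> V -> R) d Cg g m phi psi :
  riesz_basis w C -> 0 < C -> 0 < c0 -> goodf w c0 K b d Cg g ->
  gphi w b m phi -> gphi w (flipb b) m psi -> c0 / C <= b phi psi.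
Proof.
move=> hR hC hc0 hg hphi hpsi; have [hb _ _ _] := hg.
by rewrite (gdiag hb hphi hpsi); apply: (gphi_lb hR hC hc0 hg hphi).
Qed.

Lemma step_gphi (R : realType) (V : normedModType R) (w : nat -> V) (C c0 K : R)
    (b : V -> V -> R) d Cg g (phi psi : nat -> V) N :
  riesz_basis w C -> 0 < C -> 0 < c0 -> goodf w c0 K b d Cg g ->
  (forall m, (m < N)%N -> gphi w b m (phi m) /\ gphi w (flipb b) m (psi m)) ->
  gphi w b N (w N - \sum_(m < N) (b (w N) (psi m) / b (phi m) (psi m)) *: phi m).
Proof.
move=> hR hC hc0 hg hsys; have [hb _ _ _] := hg.
split.
  rewrite addrAC subrr add0r -scaleN1r; apply: spanZ.
  apply: (@span_sumZ R V w N N (fun m => b (w N) (psi m) / b (phi m) (psi m)) phi) => i hi.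
  exact: gphi_inN (hsys i hi).1 hi.
move=> v hv.
have [beta ->] := span_by (psi := psi) (fun m hm => (hsys m hm).2.1) hv.
rewrite (bil_rsumZ N beta psi _ hb) big1 // => j _.
have hj := ltn_ord j.
rewrite bil_lB // (bil_lsumZ N (fun m => b (w N) (psi m) / b (phi m) (psi m)) phi _ hb).
rewrite (bigD1 j) //= big1 ?addr0; last first.
  move=> i hij; rewrite (biorth (hsys i (ltn_ord i)).1 (hsys j hj).2) ?mulr0 //.
  by move=> e; move/eqP: hij; apply; apply: val_inj.
have ht := tpos hR hC hc0 hg (hsys j hj).1 (hsys j hj).2.
have ht0 : b (phi j) (psi j) != 0.
  by apply: lt0r_neq0; apply: lt_le_trans ht; apply: divr_gt0.
by rewrite divfK // subrr mulr0.
Qed.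

Lemma sys_exists (R : realType) (V : normedModType R) (w : nat -> V) (C c0 K : R)
    (b : V -> V -> R) d Cg g :
  riesz_basis w C -> 0 < C -> 0 < c0 -> nat_metric d -> goodf w c0 K b d Cg g ->
  forall N, exists phi psi : nat -> V,
    forall m, (m < N)%N -> gphi w b m (phi m) /\ gphi w (flipb b) m (psi m).
Proof.
move=> hR hC hc0 hd hg; have hg' := goodf_flip hd hg.
elim=> [|N [phi [psi hsys]]]; first by exists (fun _ => 0), (fun _ => 0).
have h1 := step_gphi hR hC hc0 hg hsys.
have h2 := @step_gphi R V w C c0 K (flipb b) d Cg g psi phi N hR hC hc0 hg'
   (fun m hm => conj (hsys m hm).2 (hsys m hm).1).
exists (fun m => if m == N then w N - \sum_(m < N) (b (w N) (psi m) / b (phi m) (psi m)) *: phi m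
                 else phi m).
exists (fun m => if m == N then w N - \sum_(m < N) (b (phi m) (w N) / b (phi m) (psi m)) *: psi m
                 else psi m).
move=> m; rewrite ltnS leq_eqVlt => /orP [/eqP -> | hm].
  by rewrite eqxx; split => //.
by rewrite (ltn_eqF hm); apply: hsys.
Qed.

Lemma sys_fun (R : realType) (V : normedModType R) (w : nat -> V) (C c0 K : R)
    (b : V -> V -> R) d Cg g :
  riesz_basis w C -> 0 < C -> 0 < c0 -> nat_metric d -> goodf w c0 K b d Cg g ->
  exists phi psi : nat -> V,
    forall m, gphi w b m (phi m) /\ gphi w (flipb b) m (psi m).
Proof.
move=> hR hC hc0 hd hg.
have h : forall m, exists pp : V * V, gphi w b m pp.1 /\ gphi w (flipb b) m pp.2.
  move=> m; have [phi [psi hs]] := sys_exists hR hC hc0 hd hg m.+1.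
  by exists (phi m, psi m); apply: hs.
have [f hf] := choice h.
by exists (fun m => (f m).1), (fun m => (f m).2).
Qed.

Record setting (R : realType) (V : normedModType R) (w : nat -> V) (C c0 K : R)
    (b : V -> V -> R) d Cg g (Bf : R -> R) (e : R) : Prop := Setting {
  sR : riesz_basis w C; sC : 0 < C; sc0 : 0 < c0; sK : 0 < K;
  sd : nat_metric d; sB : summ d Bf; sg : goodf w c0 K b d Cg g;
  sg0 : 0 < g; sCg : 0 <= Cg; se : 0 < e; seg : e <= g / 4;
  seB : e * (Cg * (2 / g)) * Bf (g / 4) <= c0 / C / 2 }.

Lemma setting_flip (R : realType) (V : normedModType R) (w : nat -> V) (C c0 K : R)
    (b : V -> V -> R) d Cg g (Bf : R -> R) (e : R) :
  setting w C c0 K b d Cg g Bf e -> setting w C c0 K (flipb b) d Cg g Bf e.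
Proof. by case=> *; split => //; apply: goodf_flip. Qed.

Definition DD (R : realType) (C c0 K : R) := 1 + 2 * (K ^+ 2 * C / c0) / (c0 / C).
Definition AL (R : realType) (C c0 K : R) (Be : R) :=
  ((c0 / C)^-1) ^+ 2 * (DD C c0 K * Be) ^+ 2 * (K ^+ 2 * C).

Lemma sumg_bound (R : realType) (V : normedModType R) (w : nat -> V) (C K : R)
    (b : V -> V -> R) x M :
  riesz_basis w C -> 0 < C -> 0 <= K -> bil b -> (forall x y, `|b x y| <= K * `|x| * `|y|) ->
  \sum_(k < M) b x (w k) ^+ 2 <= K ^+ 2 * C * `|x| ^+ 2.
Proof.
move=> hR hC hK hb hKb.
set G := \sum_(k < M) b x (w k) ^+ 2.
set z := \sum_(k < M) b x (w k) *: w k.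
have hG0 : 0 <= G by apply: sumr_ge0 => i _; apply: sqr_ge0.
have eG : G = b x z.
  by rewrite /z (bil_rsumZ M (fun k => b x (w k)) w x hb); apply: eq_bigr => i _; rewrite expr2.
have [h1 _] := riesz_fin hR M (fun k => b x (w k)); rewrite -/z -/G in h1.
have hz : `|z| ^+ 2 <= C * G by rewrite -ler_pdivrMl.
have h2 : G <= K * `|x| * `|z| by rewrite eG; apply: le_trans (ler_norm _) (hKb _ _).
have hx := normr_ge0 x; have hzz := normr_ge0 z.
have h3 : G ^+ 2 <= K ^+ 2 * `|x| ^+ 2 * (C * G).
  apply: (@le_trans _ _ ((K * `|x| * `|z|) ^+ 2)).
    by rewrite ler_sqr ?nnegrE //; apply: mulr_ge0 => //; apply: mulr_ge0.
  rewrite !exprMn; apply: ler_wpM2l hz; rewrite -exprMn; exact: sqr_ge0.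
case: (ltrP 0 G) => hGp; last first.
  have -> : G = 0 by apply: le_anti; rewrite hGp hG0.
  by apply: mulr_ge0; [apply: mulr_ge0; [apply: sqr_ge0 | exact: ltW] | apply: sqr_ge0].
rewrite -(ler_pM2r hGp).
have -> : K ^+ 2 * C * `|x| ^+ 2 * G = K ^+ 2 * `|x| ^+ 2 * (C * G) by ring.
by rewrite -expr2.
Qed.

Lemma psi_coef (R : realType) (V : normedModType R) (w : nat -> V) (C c0 K : R)
    (b : V -> V -> R) d Cg g (Bf : R -> R) (e : R) (phi psi : nat -> V) :
  setting w C c0 K b d Cg g Bf e ->
  (forall m, gphi w b m (phi m) /\ gphi w (flipb b) m (psi m)) ->
  exists P : nat -> nat -> R, forall m,
    [/\ psi m = \sum_(k < m.+1) P m k *: w k, forall k, (m < k)%N -> P m k = 0 &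
        forall k, `|P m k| <= DD C c0 K * expR (- (e * d k m))].
Proof.
move=> hs hsys; have hs' := setting_flip hs; case: hs' => hR hC hc0 hK hd hB hg hg0 hCg he heg heB.
have h : forall m, exists c : nat -> R,
    [/\ psi m = \sum_(k < m.+1) c k *: w k, forall k, (m < k)%N -> c k = 0 &
        forall k, `|c k| <= DD C c0 K * expR (- (e * d k m))].
  by move=> m; exact: (decay hR hC hc0 (ltW hK) hd hB hg hg0 hCg he heg heB (hsys m).2).
have [f hf] := choice h; by exists f.
Qed.

Lemma bpsi (R : realType) (V : normedModType R) (w : nat -> V) (b : V -> V -> R)
    (phi psi : nat -> V) M (y : nat -> R) j :
  bil b -> (forall m, gphi w b m (phi m) /\ gphi w (flipb b) m (psi m)) -> (j < M)%N ->
  b (\sum_(m < M) y m *: phi m) (psi j) = y j * b (phi j) (psi j).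
Proof.
move=> hb hsys hj.
rewrite (bil_lsumZ M y phi _ hb) (bigD1 (Ordinal hj)) //= big1 ?addr0 // => i hij.
rewrite (biorth (hsys i).1 (hsys j).2) ?mulr0 // => e.
by move/eqP: hij; apply; apply: val_inj.
Qed.

Lemma rieszL (R : realType) (V : normedModType R) (w : nat -> V) (C c0 K : R)
    (b : V -> V -> R) d Cg g (Bf : R -> R) (e : R) (phi psi : nat -> V) :
  setting w C c0 K b d Cg g Bf e ->
  (forall m, gphi w b m (phi m) /\ gphi w (flipb b) m (psi m)) ->
  forall M (y : nat -> R),
  \sum_(m < M) y m ^+ 2 <= AL C c0 K (Bf e) * `|\sum_(m < M) y m *: phi m| ^+ 2.
Proof.
move=> hs hsys M y; have [P hP] := psi_coef hs hsys.
case: hs => hR hC hc0 hK hd hB hg hg0 hCg he heg heB.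
have [hb hKb hcb hMb] := hg.
have [d0 dz dsym dtri] := hd.
set x := \sum_(m < M) y m *: phi m.
set al := c0 / C.
have hal : 0 < al by apply: divr_gt0.
have hD0 : 0 <= DD C c0 K.
  rewrite /DD; apply: addr_ge0 => //; apply: divr_ge0; last exact: ltW.
  apply: mulr_ge0 => //; apply: divr_ge0; last exact: ltW.
  by apply: mulr_ge0; [apply: sqr_ge0 | exact: ltW].
have [hBe0 hBe] := hB e he.
have s1 : forall j, (j < M)%N -> y j ^+ 2 <= al^-1 ^+ 2 * b x (psi j) ^+ 2.
  move=> j hj; rewrite /x (bpsi y hb hsys hj).
  have ht := tpos hR hC hc0 hg (hsys j).1 (hsys j).2; rewrite -/al in ht.
  set t := b (phi j) (psi j) in ht *.
  have h1 : al ^+ 2 <= t ^+ 2 by nra.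
  have h2 : al ^+ 2 * y j ^+ 2 <= (y j * t) ^+ 2.
    rewrite [X in _ <= X]exprMn [X in X <= _]mulrC; apply: ler_wpM2l; [exact: sqr_ge0 | exact: h1].
  have -> : y j ^+ 2 = al^-1 ^+ 2 * (al ^+ 2 * y j ^+ 2).
    by field; exact: lt0r_neq0.
  by apply: ler_wpM2l; [exact: sqr_ge0 | exact: h2].
have s2 : forall j, (j < M)%N -> b x (psi j) = \sum_(k < M) P j k * b x (w k).
  move=> j hj; have [ep ez _] := hP j.
  rewrite ep (bil_rsumZ j.+1 (P j) w x hb).
  by apply: (sum_widen (F := fun k => P j k * b x (w k))) => // k hk; rewrite ez // mul0r.
have s3 : \sum_(j < M) (\sum_(k < M) P j k * b x (w k)) ^+ 2 <=
          (DD C c0 K * Bf e) ^+ 2 * \sum_(k < M) b x (w k) ^+ 2.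
  apply: (@schur2 R M P (fun j k => DD C c0 K * expR (- (e * d k j))) (fun k => b x (w k)) (DD C c0 K * Bf e)).
  - by move=> j k; have [_ _ hb'] := hP j; apply: hb'.
  - move=> j; rewrite -mulr_sumr; apply: ler_wpM2l => //.
    under eq_bigr do rewrite dsym.
    exact: hBe.
  - by move=> k; rewrite -mulr_sumr; apply: ler_wpM2l => //; apply: hBe.
  - by apply: mulr_ge0 => //; exact: ltW.
have s4 := sumg_bound x M hR hC (ltW hK) hb hKb.
apply: (@le_trans _ _ (\sum_(j < M) al^-1 ^+ 2 * b x (psi j) ^+ 2)).
  by apply: ler_sum => j _; apply: s1.
rewrite -mulr_sumr.
rewrite (eq_bigr (fun j : 'I_M => (\sum_(k < M) P j k * b x (w k)) ^+ 2)); last first.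
  by move=> j _; rewrite s2.
have -> : AL C c0 K (Bf e) * `|x| ^+ 2 =
   al^-1 ^+ 2 * ((DD C c0 K * Bf e) ^+ 2 * (K ^+ 2 * C * `|x| ^+ 2)) by rewrite /AL -/al; ring.
apply: ler_wpM2l; first exact: sqr_ge0.
apply: le_trans s3 _; apply: ler_wpM2l; [exact: sqr_ge0 | exact: s4].
Qed.
Definition AU (R : realType) (C c0 K : R) (Be : R) :=
  (K ^+ 2 * C / c0) ^+ 2 * AL C c0 K Be / c0 ^+ 2.

Lemma AL_gt0 (R : realType) (C c0 K Be : R) :
  0 < C -> 0 < c0 -> 0 < K -> 0 < Be -> 0 < AL C c0 K Be.
Proof.
move=> hC hc0 hK hB.
have hal : 0 < c0 / C by apply: divr_gt0.
have hD : 0 < DD C c0 K.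
  rewrite /DD; apply: ltr_wpDr => //; apply: divr_ge0; last exact: ltW.
  apply: mulr_ge0 => //; apply: divr_ge0; last exact: ltW.
  by apply: mulr_ge0; [apply: sqr_ge0 | exact: ltW].
rewrite /AL; apply: mulr_gt0; first apply: mulr_gt0.
- by apply: exprn_gt0; rewrite invr_gt0.
- by apply: exprn_gt0; apply: mulr_gt0.
- by apply: mulr_gt0 => //; apply: exprn_gt0.
Qed.

Lemma amgm_u (R : realType) (a y t u T : R) : 0 < u -> 0 <= t -> t <= T ->
  a * y * t <= T * ((u * a ^+ 2 + y ^+ 2 / u) / 2).
Proof.
move=> hu ht htT.
have hu0 : u != 0 by apply: lt0r_neq0.
have e : u^-1 * (u * a - y) ^+ 2 = u * a ^+ 2 - 2 * a * y + y ^+ 2 / u by field.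
have hi : 0 <= u^-1 by rewrite invr_ge0 ltW.
have h0 := mulr_ge0 hi (sqr_ge0 (u * a - y)); rewrite e in h0.
have hz : 0 <= u * a ^+ 2 + y ^+ 2 / u.
  apply: addr_ge0; first by apply: mulr_ge0; [exact: ltW | exact: sqr_ge0].
  by apply: mulr_ge0 => //; exact: sqr_ge0.
set Z := (u * a ^+ 2 + y ^+ 2 / u) / 2.
have hZ : a * y <= Z by rewrite /Z; lra.
have hZ0 : 0 <= Z by rewrite /Z; lra.
nra.
Qed.

Lemma rieszU (R : realType) (V : normedModType R) (w : nat -> V) (C c0 K : R)
    (b : V -> V -> R) d Cg g (Bf : R -> R) (e : R) (phi psi : nat -> V) :
  setting w C c0 K b d Cg g Bf e ->
  (forall m, gphi w b m (phi m) /\ gphi w (flipb b) m (psi m)) ->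
  forall M (y : nat -> R),
  `|\sum_(m < M) y m *: phi m| ^+ 2 <= AU C c0 K (Bf e) * \sum_(m < M) y m ^+ 2.
Proof.
move=> hs hsys M y.
have hs' := setting_flip hs.
have hsys' : forall m, gphi w (flipb b) m (psi m) /\ gphi w (flipb (flipb b)) m (phi m).
  by move=> m; split; [exact: (hsys m).2 | exact: (hsys m).1].
case: hs => hR hC hc0 hK hd hB hg hg0 hCg he heg heB.
have [hb hKb hcb hMb] := hg.
have [hBe0 hBe] := hB e he.
set x := \sum_(m < M) y m *: phi m.
have hx : span_first w M x.
  by apply: (@span_sumZ R V w M M y phi) => m hm; exact: gphi_inN (hsys m).1 hm.
have [beta hbeta] := span_by (psi := psi) (fun m _ => (hsys m).2.1) hx.
have hL := rieszL hs' hsys' M beta; rewrite -hbeta in hL.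
set A := AL C c0 K (Bf e) in hL *.
have hA : 0 < A by apply: AL_gt0.
set T := K ^+ 2 * C / c0.
have hT : 0 < T by apply: divr_gt0 => //; apply: mulr_gt0 => //; apply: exprn_gt0.
set u := c0 / (T * A).
have hu : 0 < u by apply: divr_gt0 => //; apply: mulr_gt0.
have bxx : b x x = \sum_(m < M) beta m * (y m * b (phi m) (psi m)).
  rewrite {2}hbeta (bil_rsumZ M beta psi x hb); apply: eq_bigr => m _.
  by rewrite /x (bpsi y hb hsys (ltn_ord m)).
set Y := \sum_(m < M) y m ^+ 2.
set B2 := \sum_(m < M) beta m ^+ 2 in hL.
have h1 : b x x <= T * ((u * B2 + Y / u) / 2).
  rewrite bxx.
  have -> : T * ((u * B2 + Y / u) / 2) =
      \sum_(m < M) T * ((u * beta m ^+ 2 + y m ^+ 2 / u) / 2).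
    by rewrite -mulr_sumr -mulr_suml big_split /= -mulr_sumr -mulr_suml.
  apply: ler_sum => m _.
  have ht0 := tpos hR hC hc0 hg (hsys m).1 (hsys m).2.
  have ht1 : 0 <= b (phi m) (psi m).
    by apply: le_trans ht0; apply: divr_ge0; exact: ltW.
  have ht2 : b (phi m) (psi m) <= T.
    rewrite (gdiag hb (hsys m).1 (hsys m).2).
    exact: (gphi_ub hR hC hc0 (ltW hK) hg (hsys m).1).
  rewrite mulrA; exact: amgm_u.
have h2 := hcb x.
have hT0 : T != 0 by apply: lt0r_neq0.
have hA0 : A != 0 by apply: lt0r_neq0.
have hc00 : c0 != 0 by apply: lt0r_neq0.
have e1 : T * (u * B2 / 2) <= c0 * `|x| ^+ 2 / 2.
  have -> : T * (u * B2 / 2) = c0 / A * B2 / 2.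
    by rewrite /u; field; rewrite ?hA0 ?hT0 ?hc00.
  rewrite ler_pM2r ?invr_gt0 //.
  apply: (@le_trans _ _ (c0 / A * (A * `|x| ^+ 2))).
    by apply: ler_wpM2l => //; apply: divr_ge0; exact: ltW.
  by rewrite mulrA divfK.
have e2 : T * (Y / u / 2) = T ^+ 2 * A * Y / c0 / 2.
  by rewrite /u; field; rewrite ?hA0 ?hT0 ?hc00.
have h3 : c0 * `|x| ^+ 2 <= T ^+ 2 * A * Y / c0.
  have : c0 * `|x| ^+ 2 <= T * (u * B2 / 2) + T * (Y / u / 2).
    by apply: le_trans h2 _; apply: le_trans h1 _; rewrite -mulrDr; apply: ler_wpM2l;
       [exact: ltW | rewrite mulrDl].
  rewrite e2; lra.
rewrite /AU -/T -/A.
have -> : T ^+ 2 * A / c0 ^+ 2 * Y = (T ^+ 2 * A * Y / c0) / c0.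
  by field; rewrite ?hA0 ?hT0 ?hc00.
by rewrite ler_pdivlMr // mulrC.
Qed.

Definition gN (R : realType) (V : normedModType R) (phi : nat -> V) (y : nat -> R) n :=
  \sum_(m < n) y m *: phi m.

Lemma gN_span (R : realType) (V : normedModType R) (w : nat -> V) (b : V -> V -> R)
    (phi psi : nat -> V) (y : nat -> R) n :
  (forall m, gphi w b m (phi m) /\ gphi w (flipb b) m (psi m)) ->
  span_first w n (gN phi y n).
Proof.
by move=> hsys; apply: (@span_sumZ R V w n n y phi) => m hm; exact: gphi_inN (hsys m).1 hm.
Qed.

Lemma gN_gal (R : realType) (V : normedModType R) (w : nat -> V) (b : V -> V -> R)
    (phi psi : nat -> V) (y : nat -> R) u n :
  bil b -> (forall m, gphi w b m (phi m) /\ gphi w (flipb b) m (psi m)) ->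
  (forall m, y m * b (phi m) (psi m) = b u (psi m)) ->
  forall v, span_first w n v -> b (gN phi y n) v = b u v.
Proof.
move=> hb hsys hy v hv.
have [beta ->] := span_by (psi := psi) (fun m _ => (hsys m).2.1) hv.
rewrite (bil_rsumZ n beta psi (gN phi y n) hb) (bil_rsumZ n beta psi u hb).
apply: eq_bigr => j _.
by rewrite /gN (bpsi y hb hsys (ltn_ord j)) hy.
Qed.

Lemma cancel_norm (R : realType) (c0 K z r : R) :
  0 < c0 -> 0 <= K -> 0 <= z -> 0 <= r -> c0 * z ^+ 2 <= K * z * r -> c0 * z <= K * r.
Proof.
move=> hc hK hz hr h.
case: (ltrP 0 z) => hz0; last first.
  have -> : z = 0 by apply: le_anti; rewrite hz0 hz.
  by rewrite mulr0; apply: mulr_ge0.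
rewrite -(ler_pM2r hz0).
have -> : c0 * z * z = c0 * z ^+ 2 by ring.
by have -> : K * r * z = K * z * r by ring.
Qed.

Lemma cea (R : realType) (V : normedModType R) (w : nat -> V) (b : V -> V -> R)
    (c0 K : R) n u gg :
  0 < c0 -> 0 <= K -> bil b -> (forall x y, `|b x y| <= K * `|x| * `|y|) ->
  (forall x, c0 * `|x| ^+ 2 <= b x x) ->
  span_first w n gg -> (forall v, span_first w n v -> b gg v = b u v) ->
  forall v, span_first w n v -> c0 * `|u - gg| <= K * `|u - v|.
Proof.
move=> hc hK hb hKb hcb hg hgal v hv.
apply: cancel_norm => //.
have h0 : b (u - gg) (v - gg) = 0.
  rewrite bil_lB // hgal //; first by rewrite subrr.
  exact: spanB.
have e : b (u - gg) (u - gg) = b (u - gg) (u - v) + b (u - gg) (v - gg).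
  by rewrite -bil_rD // addrA subrK.
rewrite h0 addr0 in e.
apply: le_trans (hcb _) _; rewrite e.
by apply: le_trans (ler_norm _) _; apply: hKb.
Qed.

Lemma stab (R : realType) (V : normedModType R) (w : nat -> V) (b : V -> V -> R)
    (c0 K : R) n m u gn gm :
  0 < c0 -> 0 <= K -> bil b -> (forall x y, `|b x y| <= K * `|x| * `|y|) ->
  (forall x, c0 * `|x| ^+ 2 <= b x x) -> (n <= m)%N ->
  span_first w n gn -> span_first w m gm ->
  (forall v, span_first w m v -> b gm v = b u v) ->
  c0 * `|gm - gn| <= K * `|u - gn|.
Proof.
move=> hc hK hb hKb hcb hnm hgn hgm hgal.
have hz : span_first w m (gm - gn) by apply: spanB => //; exact: span_mono hgn.
apply: cancel_norm => //.
have e : b (gm - gn) (gm - gn) = b (u - gn) (gm - gn) by rewrite !bil_lB // hgal.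
apply: le_trans (hcb _) _; rewrite e.
by apply: le_trans (ler_norm _) _; rewrite mulrAC; apply: le_trans (hKb _ _) _; rewrite mulrAC.
Qed.

Lemma gal_unique (R : realType) (V : normedModType R) (w : nat -> V) (b : V -> V -> R)
    (c0 : R) n z1 z2 :
  0 < c0 -> bil b -> (forall x, c0 * `|x| ^+ 2 <= b x x) ->
  span_first w n z1 -> span_first w n z2 ->
  (forall v, span_first w n v -> b z1 v = b z2 v) -> z1 = z2.
Proof.
move=> hc hb hcb h1 h2 h.
have hz : span_first w n (z1 - z2) by apply: spanB.
have e : b (z1 - z2) (z1 - z2) = 0 by rewrite bil_lB // h // subrr.
have := hcb (z1 - z2); rewrite e => h0.
have : `|z1 - z2| ^+ 2 <= 0.
  by rewrite -(ler_pM2l hc) mulr0.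
move=> h3; have hn := normr_ge0 (z1 - z2).
have : `|z1 - z2| = 0 by apply: le_anti; rewrite hn andbT; nra.
by move/normr0_eq0/eqP; rewrite subr_eq0 => /eqP.
Qed.

Lemma gN_diff (R : realType) (V : normedModType R) (phi : nat -> V) (y : nat -> R) n m :
  (n <= m)%N ->
  gN phi y m - gN phi y n = \sum_(j < m) (if (n <= j)%N then y j else 0) *: phi j.
Proof.
move=> hnm; rewrite /gN.
have e1 : \sum_(j < m) y j *: phi j =
    \sum_(j < m) (if (j < n)%N then y j else 0) *: phi j +
    \sum_(j < m) (if (n <= j)%N then y j else 0) *: phi j.
  rewrite -big_split /=; apply: eq_bigr => j _; rewrite -scalerDl; congr (_ *: _).
  by case: (ltnP j n); rewrite ?addr0 ?add0r.
have e2 : \sum_(j < m) (if (j < n)%N then y j else 0) *: phi j = \sum_(j < n) y j *: phi j.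
  rewrite -(sum_widen (F := fun j => (if (j < n)%N then y j else 0) *: phi j) hnm); last first.
    by move=> k hk; rewrite ltnNge hk scale0r.
  by apply: eq_bigr => j _; rewrite ltn_ord.
by rewrite e1 e2 addrAC subrr add0r.
Qed.

Definition Yb (R : realType) (y : nat -> R) n m :=
  \sum_(j < m) (if (n <= j)%N then y j ^+ 2 else 0).

Lemma Yb_sq (R : realType) (y : nat -> R) n m :
  \sum_(j < m) (if (n <= j)%N then y j else 0) ^+ 2 = Yb y n m.
Proof. by apply: eq_bigr => j _; case: ifP => _ //; rewrite expr0n. Qed.

Lemma Yb_add (R : realType) (y : nat -> R) n m p :
  (n <= m)%N -> (m <= p)%N -> Yb y n m + Yb y m p = Yb y n p.
Proof.
move=> hnm hmp; rewrite /Yb.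
have e1 : \sum_(j < p) (if (n <= j)%N then y j ^+ 2 else 0) =
    \sum_(j < p) (if (n <= j)%N && (j < m)%N then y j ^+ 2 else 0) +
    \sum_(j < p) (if (m <= j)%N then y j ^+ 2 else 0).
  rewrite -big_split /=; apply: eq_bigr => j _.
  case: (ltnP j m) => hjm; rewrite ?andbT ?andbF ?addr0 ?add0r //.
  by rewrite (leq_trans hnm hjm).
have e2 : \sum_(j < p) (if (n <= j)%N && (j < m)%N then y j ^+ 2 else 0) =
    \sum_(j < m) (if (n <= j)%N then y j ^+ 2 else 0).
  rewrite -(sum_widen (F := fun j => if (n <= j)%N && (j < m)%N then y j ^+ 2 else 0) hmp).
    by apply: eq_bigr => j _; rewrite ltn_ord andbT.
  by move=> k hk; rewrite ltnNge hk andbF.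
by rewrite e1 e2.
Qed.

Lemma Yb_ge0 (R : realType) (y : nat -> R) n m : 0 <= Yb y n m.
Proof. by apply: sumr_ge0 => j _; case: ifP => _ //; exact: sqr_ge0. Qed.

Lemma mono_N (N : nat -> nat) : (forall l, (N l < N l.+1)%N) ->
  forall l L, (l <= L)%N -> (N l <= N L)%N.
Proof.
move=> hN l; elim=> [|L IH]; first by rewrite leqn0 => /eqP ->.
rewrite leq_eqVlt => /orP [/eqP -> // | hl].
by apply: leq_trans (IH hl) (ltnW (hN L)).
Qed.

Lemma N_ge (N : nat -> nat) : (forall l, (N l < N l.+1)%N) -> forall L, (L <= N L)%N.
Proof. by move=> hN; elim=> // L IH; apply: leq_ltn_trans IH (hN L). Qed.

Lemma Yb_tele (R : realType) (y : nat -> R) (N : nat -> nat) l L :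
  (forall l, (N l < N l.+1)%N) -> (l <= L)%N ->
  \sum_(l <= k < L) Yb y (N k) (N k.+1) = Yb y (N l) (N L).
Proof.
move=> hN; elim: L => [|L IH].
  by rewrite leqn0 => /eqP ->; rewrite big_geq // /Yb big1 // => j _; rewrite leqNgt ltn_ord.
rewrite leq_eqVlt => /orP [/eqP <- | hl].
  by rewrite big_geq // /Yb big1 // => j _; rewrite leqNgt ltn_ord.
rewrite big_nat_recr //= IH // Yb_add //; first exact: mono_N.
exact: ltnW.
Qed.

Lemma sq_tri (R : realType) (V : normedModType R) (a c : V) :
  `|a + c| ^+ 2 <= 2 * `|a| ^+ 2 + 2 * `|c| ^+ 2.
Proof.
have h := ler_normD a c; have h1 := normr_ge0 (a + c).
have h2 := normr_ge0 a; have h3 := normr_ge0 c.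
have h4 : `|a + c| ^+ 2 <= (`|a| + `|c|) ^+ 2 by rewrite ler_sqr ?nnegrE //; apply: addr_ge0.
have := sqr_ge0 (`|a| - `|c|); nra.
Qed.

Definition Cqo_of (R : realType) (C c0 K Be : R) :=
  2 * (AU C c0 K Be * AL C c0 K Be) + AU C c0 K Be * AL C c0 K Be * (K / c0) ^+ 2 + 1.

Lemma core (R : realType) (V : normedModType R) (w : nat -> V) (C c0 K : R)
    (a : V -> V -> R) d Cg g (Bf : R -> R) (e : R) (phi psi : nat -> V) :
  setting w C c0 K a d Cg g Bf e ->
  (forall m, gphi w a m (phi m) /\ gphi w (flipb a) m (psi m)) ->
  forall (u : V) (N : nat -> nat) (ul : nat -> V),
    (forall l, (N l < N l.+1)%N) ->
    (forall l, span_first w (N l) (ul l) /\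
               forall v, span_first w (N l) v -> a (ul l) v = a u v) ->
    forall l : nat,
      (((Cqo_of C c0 K (Bf e))^-1 * `|u - ul l| ^+ 2)%:E
         <= \sum_(l <= k <oo) (`|ul k.+1 - ul k| ^+ 2)%:E)%E /\
      (\sum_(l <= k <oo) (`|ul k.+1 - ul k| ^+ 2)%:E
         <= (Cqo_of C c0 K (Bf e) * `|u - ul l| ^+ 2)%:E)%E.
Proof.
move=> hs hsys u N ul hN hul l.
have hs0 := hs.
case: hs0 => hR hC hc0 hK hd hB hg hg0 hCg he heg heB.
have [hb hKb hcb hMb] := hg.
have [hBe0 hBe] := hB e he.
set AL' := AL C c0 K (Bf e).
set AU' := AU C c0 K (Bf e).
have hAL : 0 < AL' by apply: AL_gt0.
have hAU : 0 < AU'.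
  rewrite /AU' /AU -/AL'; apply: divr_gt0; last by apply: exprn_gt0.
  apply: mulr_gt0 => //; apply: exprn_gt0; apply: divr_gt0 => //.
  by apply: mulr_gt0 => //; apply: exprn_gt0.
set y := fun m => a u (psi m) / a (phi m) (psi m).
have hy : forall m, y m * a (phi m) (psi m) = a u (psi m).
  move=> m; rewrite /y divfK //; apply: lt0r_neq0.
  apply: lt_le_trans (tpos hR hC hc0 hg (hsys m).1 (hsys m).2); exact: divr_gt0.
set G := fun n => gN phi y n.
have hGs : forall n, span_first w n (G n) by move=> n; exact: gN_span.
have hGg : forall n v, span_first w n v -> a (G n) v = a u v.
  by move=> n v hv; have := gN_gal hb hsys hy hv; apply.
have hG : ul = fun l => G (N l).
  apply: funext => k; apply: (gal_unique hc0 hb hcb (hul k).1 (hGs (N k))).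
  by move=> v hv; rewrite (hul k).2 // hGg.
rewrite hG.
have kb1 : forall n m, (n <= m)%N -> Yb y n m <= AL' * `|G m - G n| ^+ 2.
  move=> n m hnm; rewrite /G gN_diff // -Yb_sq; exact: (rieszL hs hsys m (fun j => if (n <= j)%N then y j else 0)).
have kb2 : forall n m, (n <= m)%N -> `|G m - G n| ^+ 2 <= AU' * Yb y n m.
  move=> n m hnm; rewrite /G gN_diff // -Yb_sq; exact: (rieszU hs hsys m (fun j => if (n <= j)%N then y j else 0)).
have stabG : forall n m, (n <= m)%N -> `|G m - G n| ^+ 2 <= (K / c0) ^+ 2 * `|u - G n| ^+ 2.
  move=> n m hnm.
  have h := stab hc0 (ltW hK) hb hKb hcb hnm (hGs n) (hGs m) (hGg m).
  rewrite -exprMn ler_sqr ?nnegrE; last first.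
  - by apply: mulr_ge0; [apply: divr_ge0; exact: ltW | exact: normr_ge0].
  - exact: normr_ge0.
  by rewrite mulrAC ler_pdivlMr // mulrC.
have hmono := mono_N hN.
have psum : forall L, (l <= L)%N ->
    \sum_(l <= k < L) `|G (N k.+1) - G (N k)| ^+ 2 <= AU' * AL' * `|G (N L) - G (N l)| ^+ 2
    /\ AL'^-1 * `|G (N L) - G (N l)| ^+ 2 <= AU' * \sum_(l <= k < L) `|G (N k.+1) - G (N k)| ^+ 2.
  move=> L hlL; split.
  - apply: (@le_trans _ _ (\sum_(l <= k < L) AU' * Yb y (N k) (N k.+1))).
      by apply: ler_sum => k _; apply: kb2; exact: ltnW.
    rewrite -mulr_sumr Yb_tele // -mulrA; apply: ler_wpM2l; [exact: ltW | exact: kb1 (hmono _ _ hlL)].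
  - apply: (@le_trans _ _ (AL'^-1 * (AU' * Yb y (N l) (N L)))).
      by apply: ler_wpM2l; [rewrite invr_ge0; exact: ltW | exact: kb2 (hmono _ _ hlL)].
    rewrite -Yb_tele // mulr_sumr mulr_sumr mulr_sumr; apply: ler_sum => k _.
    rewrite mulrCA; apply: ler_wpM2l; first exact: ltW.
    by rewrite ler_pdivrMl //; apply: kb1; exact: ltnW.
have hCq : 0 < Cqo_of C c0 K (Bf e).
  rewrite /Cqo_of; apply: ltr_wpDl; last exact: ltr01.
  apply: addr_ge0; first by apply: mulr_ge0 => //; apply: mulr_ge0; exact: ltW.
  by apply: mulr_ge0; [apply: mulr_ge0; exact: ltW | exact: sqr_ge0].
split; last first.
  apply: lime_le; first by apply: is_cvg_nneseries => n _ _; rewrite lee_fin; exact: sqr_ge0.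
  exists l => // L /= hL; rewrite sumEFin lee_fin.
  apply: le_trans (psum L hL).1 _.
  apply: (@le_trans _ _ (AU' * AL' * ((K / c0) ^+ 2 * `|u - G (N l)| ^+ 2))).
    by apply: ler_wpM2l; [apply: mulr_ge0; exact: ltW | exact: stabG (hmono _ _ hL)].
  rewrite mulrA; apply: ler_wpM2r; first exact: sqr_ge0.
  rewrite /Cqo_of -/AL' -/AU'.
  have : 0 <= 2 * (AU' * AL') by apply: mulr_ge0 => //; apply: mulr_ge0; exact: ltW.
  lra.
have conv : forall eta, 0 < eta -> exists L0, forall L, (L0 <= L)%N -> `|u - G (N L)| <= eta.
  move=> eta heta; have [lam hlam] := hR.1 u.
  have heps : 0 < eta * c0 / K by apply: divr_gt0 => //; apply: mulr_gt0.
  move/cvgrPdist_le: hlam => /(_ _ heps) [M0 _ hM0].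
  exists M0 => L hL.
  have hsN := span_sum w (N L) lam.
  have hc := cea hc0 (ltW hK) hb hKb hcb (hGs (N L)) (hGg (N L)) hsN.
  have hM := hM0 (N L) (leq_trans hL (N_ge hN L)); simpl in hM.
  have h1 : K * `|u - \sum_(i < N L) lam i *: w i| <= eta * c0.
    have -> : eta * c0 = K * (eta * c0 / K) by field; exact: lt0r_neq0.
    by apply: ler_wpM2l => //; exact: ltW.
  rewrite -(ler_pM2l hc0); apply: le_trans hc _.
  by rewrite [c0 * eta]mulrC.
have hpart : forall L, (\sum_(l <= k < L) (`|G (N k.+1) - G (N k)| ^+ 2)%:E <=
                       \sum_(l <= k <oo) (`|G (N k.+1) - G (N k)| ^+ 2)%:E)%E.
  by move=> L; apply: nneseries_lim_ge => n _ _; rewrite lee_fin; exact: sqr_ge0.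
have hS0 : (0 <= \sum_(l <= k <oo) (`|G (N k.+1) - G (N k)| ^+ 2)%:E)%E.
  by apply: nneseries_ge0 => n _ _; rewrite lee_fin; exact: sqr_ge0.
move: hpart hS0.
case: (\sum_(l <= k <oo) (`|G (N k.+1) - G (N k)| ^+ 2)%:E)%E => [s| |] hpart hS0; last first.
- by [].
- exact: leey.
rewrite lee_fin in hS0; rewrite lee_fin.
have hpL : forall L, (l <= L)%N -> `|G (N L) - G (N l)| ^+ 2 <= AU' * AL' * s.
  move=> L hL; have [_ h2] := psum L hL.
  have h3 := hpart L; rewrite sumEFin lee_fin in h3.
  rewrite ler_pdivrMl // in h2.
  apply: le_trans h2 _.
  have -> : AU' * AL' * s = AL' * (AU' * s) by ring.
  apply: ler_wpM2l; first exact: ltW.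
  by apply: ler_wpM2l; first exact: ltW.
have hX : `|u - G (N l)| ^+ 2 <= 2 * (AU' * AL' * s).
  apply/ler_addgt0Pr => eps heps.
  set eta := Num.min 1 (eps / 2).
  have heta : 0 < eta by rewrite lt_min ltr01 divr_gt0.
  have heta1 : eta <= 1 by rewrite ge_min lexx.
  have heta2 : eta <= eps / 2 by rewrite ge_min lexx orbT.
  have [L0 hL0] := conv eta heta.
  have hl : (l <= maxn l L0)%N by apply: leq_maxl.
  have hu := hL0 _ (leq_maxr l L0).
  have eu : u - G (N l) = (u - G (N (maxn l L0))) + (G (N (maxn l L0)) - G (N l)).
    by rewrite addrA subrK.
  have tri := sq_tri (u - G (N (maxn l L0))) (G (N (maxn l L0)) - G (N l)).
  rewrite -eu in tri.
  have h1 := hpL _ hl.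
  have hn := normr_ge0 (u - G (N (maxn l L0))).
  have h2 : `|u - G (N (maxn l L0))| ^+ 2 <= eps / 2 by nra.
  lra.
rewrite ler_pdivrMl //; apply: le_trans hX _.
rewrite /Cqo_of -/AL' -/AU'.
have : 0 <= AU' * AL' * (K / c0) ^+ 2 * s.
  apply: mulr_ge0 => //; apply: mulr_ge0; last exact: sqr_ge0.
  by apply: mulr_ge0; exact: ltW.
have : 0 <= 2 * (AU' * AL') * s.
  by apply: mulr_ge0 => //; apply: mulr_ge0 => //; apply: mulr_ge0; exact: ltW.
nra.
Qed.

Lemma Cqo_gt0 (R : realType) (C c0 K Be : R) :
  0 < C -> 0 < c0 -> 0 < K -> 0 < Be -> 0 < Cqo_of C c0 K Be.
Proof.
move=> hC hc0 hK hB.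
have hAL := AL_gt0 hC hc0 hK hB.
have hAU : 0 < AU C c0 K Be.
  rewrite /AU; apply: divr_gt0; last by apply: exprn_gt0.
  apply: mulr_gt0 => //; apply: exprn_gt0; apply: divr_gt0 => //.
  by apply: mulr_gt0 => //; apply: exprn_gt0.
rewrite /Cqo_of; apply: ltr_wpDl; last exact: ltr01.
apply: addr_ge0; first by apply: mulr_ge0 => //; apply: mulr_ge0; exact: ltW.
by apply: mulr_ge0; [apply: mulr_ge0; exact: ltW | exact: sqr_ge0].
Qed.

Unset Implicit Arguments.

Theorem theorem3p12 (R : realType) (V : completeNormedModType R)
  (ip : V -> V -> R) (a : V -> V -> R) (w : nat -> V) (C c0 : R) :
  hilbert_inner ip -> separable_space V ->
  bounded_bilinear a -> coercivity_constant a c0 -> 0 < c0 ->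
  0 < C -> riesz_basis w C ->
  jaffard (fun i j => a (w j) (w i)) ->
  exists Cqo : R, 0 < Cqo /\
    forall (f : V -> R) (u : V) (N : nat -> nat) (ul : nat -> V),
      dual_elt f ->
      (forall v, a u v = f v) ->
      (forall l, (N l < N l.+1)%N) ->
      (forall l, span_first w (N l) (ul l) /\
                 forall v, span_first w (N l) v -> a (ul l) v = f v) ->
      forall l : nat,
        ((Cqo^-1 * `|u - ul l| ^+ 2)%:E
           <= \sum_(l <= k <oo) (`|ul k.+1 - ul k| ^+ 2)%:E)%E /\
        (\sum_(l <= k <oo) (`|ul k.+1 - ul k| ^+ 2)%:E
           <= (Cqo * `|u - ul l| ^+ 2)%:E)%E.
Proof.
move=> hip hsep hbil hcoer hc0 hC hR hJ.
case: hbil => hb1 hb2 [K0 hK0].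
have hb : bil a := conj hb1 hb2.
set K := `|K0| + 1.
have hK : 0 < K by rewrite /K; have := normr_ge0 K0; lra.
have hKb : forall x y, `|a x y| <= K * `|x| * `|y|.
  move=> x y; apply: le_trans (hK0 x y) _; rewrite -!mulrA.
  apply: ler_wpM2r; first by apply: mulr_ge0; exact: normr_ge0.
  by rewrite /K; have := ler_norm K0; lra.
have hcb : forall x, c0 * `|x| ^+ 2 <= a x x.
  move=> x; case: (eqVneq x 0) => [-> | hx].
    by rewrite bil_l0 // normr0 expr0n /= mulr0.
  have := hcoer.1 x hx.
  by rewrite ler_pdivlMr ?exprn_gt0 ?normr_gt0.
have [d [hd [hsum [gam [hgam hdec]]]]] := hJ.
set g := gam / 2.
have hg : 0 < g by rewrite /g divr_gt0.
have hgg : g < gam by rewrite /g; lra.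
have [Cg0 hCg0] := hdec g hg hgg.
set Cg := `|Cg0|.
have hCg : 0 <= Cg by apply: normr_ge0.
have hM : forall i j, `|a (w j) (w i)| <= Cg * expR (- (g * d i j)).
  move=> i j; apply: le_trans (hCg0 i j) _.
  by apply: ler_wpM2r; [exact: ltW (expR_gt0 _) | exact: ler_norm].
have hBex : forall eps : R, exists B : R, 0 < eps -> 0 < B /\
    forall i N, \sum_(j < N) expR (- (eps * d i j)) <= B.
  move=> eps; case: (ltrP 0 eps) => he; last first.
    by exists 0 => h; exfalso; lra.
  have [B hB] := hsum eps he.
  exists (`|B| + 1) => _; split; first by have := normr_ge0 B; lra.
  move=> i N.
  have h := @nneseries_lim_ge R (fun j => (expR (- (eps * d i j)))%:E) xpredT 0 N
     (fun n _ _ => ltW (expR_gt0 _)).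
  have h2 := le_trans h (hB i).
  rewrite sumEFin lee_fin big_mkord in h2.
  by apply: le_trans h2 _; have := ler_norm B; lra.
have [Bf hBf] := choice hBex.
have hsumm : summ d Bf by move=> eps he; exact: hBf eps he.
set X := Cg * (2 / g) * Bf (g / 4).
have hg4 : 0 < g / 4 by apply: divr_gt0.
have hX : 0 <= X.
  apply: mulr_ge0; last exact: ltW (hBf _ hg4).1.
  by apply: mulr_ge0 => //; apply: divr_ge0 => //; exact: ltW.
set Z := c0 / C / 2.
have hZ : 0 < Z by apply: divr_gt0 => //; apply: divr_gt0.
set e := Num.min (g / 4) (Z / (X + 1)).
have hX1 : 0 < X + 1 by lra.
have he : 0 < e by rewrite lt_min hg4 divr_gt0.
have heg : e <= g / 4 by rewrite ge_min lexx.
have heZ : e <= Z / (X + 1) by rewrite ge_min lexx orbT.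
have heB : e * (Cg * (2 / g)) * Bf (g / 4) <= c0 / C / 2.
  have -> : e * (Cg * (2 / g)) * Bf (g / 4) = e * X by rewrite /X; ring.
  rewrite -/Z.
  apply: (@le_trans _ _ (Z / (X + 1) * X)); first by apply: ler_wpM2r.
  rewrite mulrAC ler_pdivrMr //; apply: ler_wpM2l; [exact: ltW | lra].
have hgood : goodf w c0 K a d Cg g by split.
have hs : setting w C c0 K a d Cg g Bf e by split.
have [phi [psi hsys]] := sys_fun hR hC hc0 hd hgood.
exists (Cqo_of C c0 K (Bf e)); split.
  by apply: Cqo_gt0 => //; exact: (hBf e he).1.
move=> f u N ul hf hu hN hul l.
apply: (core hs hsys hN) => k; split; first exact: (hul k).1.
by move=> v hv; rewrite (hul k).2 // hu.
Qed.
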